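(* Let $c:[0,2\pi]\to\mathbb{R}^2$ be a regular closed plane curve of class $C^3$ with curvature $k_c$, let $r_0\in\mathbb{R}^2$, and let $p(t)=\langle c-r_0,N\rangle N+r_0$ be its pedal curve with respect to $r_0$. Then $p$ is strongly convex if and only if for all $t\in[0,2\pi)$ $$k_p(t):=\frac{k_c\{-2k_c\langle r_0-c,T\rangle^2+\langle r_0-c,N\rangle-2k_c\langle r_0-c,N\rangle^2\}}{\langle c,N\rangle\langle r_0,N\rangle+\langle c,T\rangle\langle r_0,T\rangle-\langle c,N\rangle^2-\langle r_0,T\rangle^2}>0,$$ where all quantities are evaluated at $t$.
   Context: For a regular plane curve $c(t)=(x(t),y(t))$, $T=\dot c/|\dot c|$ is the unit tangent, $N=(-\dot y,\dot x)/|\dot c|$ the unit normal, and $k_c=\langle \ddot c,N\rangle/|\dot c|^2$ the curvature, so that $\dot T=|\dot c|k_cN$, $\dot N=-|\dot c|k_cT$. The pedal curve of $c$ with respect to $r_0$ is $p(t)=\langle c(t)-r_0,N(t)\rangle N(t)+r_0$. For $u=(u_1,u_2),v=(v_1,v_2)$ set $u\times v=u_1v_2-u_2v_1$. A closed plane curve $p(t)$ is called strongly convex if $\dfrac{\dot p(t)\times\ddot p(t)}{p(t)\times\dot p(t)}>0$ for all $t$. *)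

(* Defs.v *)
From Stdlib Require Import Reals.
From Coquelicot Require Import Coquelicot.
Open Scope R_scope.

Definition dot (u v : R * R) : R := fst u * fst v + snd u * snd v.
Definition cross (u v : R * R) : R := fst u * snd v - snd u * fst v.

Definition C3 (f : R -> R) : Prop :=
  forall t, ex_derive f t /\ ex_derive (Derive_n f 1) t /\
            ex_derive (Derive_n f 2) t /\ continuous (Derive_n f 3) t.

Definition pt (x y : R -> R) (t : R) : R * R := (x t, y t).
Definition vel (x y : R -> R) (t : R) : R * R := (Derive x t, Derive y t).
Definition acc (x y : R -> R) (t : R) : R * R := (Derive_n x 2 t, Derive_n y 2 t).
Definition speed (x y : R -> R) (t : R) : R :=
  sqrt (Derive x t ^ 2 + Derive y t ^ 2).

Definition tangent (x y : R -> R) (t : R) : R * R :=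
  (Derive x t / speed x y t, Derive y t / speed x y t).
Definition normal (x y : R -> R) (t : R) : R * R :=
  (- Derive y t / speed x y t, Derive x t / speed x y t).

Definition curvature (x y : R -> R) (t : R) : R :=
  dot (acc x y t) (normal x y t) / speed x y t ^ 2.

Definition regular (x y : R -> R) : Prop := forall t, vel x y t <> (0, 0).

(* closed curve on [0, 2 pi], represented by its 2 pi-periodic extension *)
Definition closed_curve (x y : R -> R) : Prop :=
  forall t, x (t + 2 * PI) = x t /\ y (t + 2 * PI) = y t.

Definition vsub (u v : R * R) : R * R := (fst u - fst v, snd u - snd v).

Definition pedal_x (x y : R -> R) (r0 : R * R) (t : R) : R :=
  dot (vsub (pt x y t) r0) (normal x y t) * fst (normal x y t) + fst r0.
Definition pedal_y (x y : R -> R) (r0 : R * R) (t : R) : R :=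
  dot (vsub (pt x y t) r0) (normal x y t) * snd (normal x y t) + snd r0.

Definition strongly_convex (px py : R -> R) : Prop :=
  forall t, cross (vel px py t) (acc px py t) / cross (pt px py t) (vel px py t) > 0.

Definition kp (x y : R -> R) (r0 : R * R) (t : R) : R :=
  let c := pt x y t in
  let T := tangent x y t in
  let N := normal x y t in
  let k := curvature x y t in
  let d := vsub r0 c in
  (k * (- 2 * k * dot d T ^ 2 + dot d N - 2 * k * dot d N ^ 2)) /
  (dot c N * dot r0 N + dot c T * dot r0 T - dot c N ^ 2 - dot r0 T ^ 2).

(* Main.v *)
Require Import Defs.
From Stdlib Require Import Reals Lra Lia ZArith.
From Coquelicot Require Import Coquelicot.
Open Scope R_scope.
Definition qx0 (X Y a b : R) := - ((Y*a - X*b) * b) / (a^2+b^2).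
Definition qy0 (X Y a b : R) := ((Y*a - X*b) * a) / (a^2+b^2).
Definition qx1 (X Y a b a2 b2 : R) :=
  let H := Y*a - X*b in let H1 := Y*a2 - X*b2 in
  let s := a^2+b^2 in let s1 := 2*(a*a2+b*b2) in
  -(H1*b + H*b2)/s + H*b*s1/s^2.
Definition qy1 (X Y a b a2 b2 : R) :=
  let H := Y*a - X*b in let H1 := Y*a2 - X*b2 in
  let s := a^2+b^2 in let s1 := 2*(a*a2+b*b2) in
  (H1*a + H*a2)/s - H*a*s1/s^2.
Definition qx2 (X Y a b a2 b2 a3 b3 : R) :=
  let H := Y*a - X*b in let H1 := Y*a2 - X*b2 in
  let H2 := b*a2 - a*b2 + Y*a3 - X*b3 in
  let s := a^2+b^2 in let s1 := 2*(a*a2+b*b2) in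
  let s2 := 2*(a2^2+a*a3+b2^2+b*b3) in
  -(H2*b + 2*H1*b2 + H*b3)/s + 2*(H1*b+H*b2)*s1/s^2 + H*b*s2/s^2 - 2*H*b*s1^2/s^3.
Definition qy2 (X Y a b a2 b2 a3 b3 : R) :=
  let H := Y*a - X*b in let H1 := Y*a2 - X*b2 in
  let H2 := b*a2 - a*b2 + Y*a3 - X*b3 in
  let s := a^2+b^2 in let s1 := 2*(a*a2+b*b2) in
  let s2 := 2*(a2^2+a*a3+b2^2+b*b3) in
  (H2*a + 2*H1*a2 + H*a3)/s - 2*(H1*a+H*a2)*s1/s^2 - H*a*s2/s^2 + 2*H*a*s1^2/s^3.


Ltac sd := repeat match goal with |- _ /\ _ => split end; try exact I;
  try (match goal with H : forall t, is_derive ?f t (?g t) |- ex_derive (fun u => ?f u) ?t => exists (g t); exact (H t) end);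
  try (match goal with Hs : ?e <> 0 |- _ <> 0 => repeat (apply Rmult_integral_contrapositive_currified); try lra; let E := fresh "E" in intro E; apply Hs; rewrite <- E; ring end).
Ltac rd := repeat match goal with |- context [Derive (fun u => ?f u) ?t] =>
   match goal with H : forall s, is_derive f s (?g s) |- _ =>
     replace (Derive (fun u => f u) t) with (g t) by (symmetry; apply is_derive_unique; apply H) end end.

Lemma dqx0 (x y a b a2 b2 : R -> R) (rx ry t : R) :
 (forall t, is_derive x t (a t)) -> (forall t, is_derive y t (b t)) ->
 (forall t, is_derive a t (a2 t)) -> (forall t, is_derive b t (b2 t)) ->
 a t ^2 + b t^2 <> 0 ->
 is_derive (fun t => qx0 (x t - rx) (y t - ry) (a t) (b t)) t
   (qx1 (x t - rx) (y t - ry) (a t) (b t) (a2 t) (b2 t)).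
Proof.
intros Hx Hy Ha Hb Hs. unfold qx0, qx1.
auto_derive; sd. match goal with |- @eq _ ?l ?r => change (@eq R l r) end. rd. field. auto.
Qed.
Lemma dqy0 (x y a b a2 b2 : R -> R) (rx ry t : R) :
 (forall t, is_derive x t (a t)) -> (forall t, is_derive y t (b t)) ->
 (forall t, is_derive a t (a2 t)) -> (forall t, is_derive b t (b2 t)) ->
 a t ^2 + b t^2 <> 0 ->
 is_derive (fun t => qy0 (x t - rx) (y t - ry) (a t) (b t)) t
   (qy1 (x t - rx) (y t - ry) (a t) (b t) (a2 t) (b2 t)).
Proof.
intros Hx Hy Ha Hb Hs. unfold qy0, qy1.
auto_derive; sd. match goal with |- @eq _ ?l ?r => change (@eq R l r) end. rd. field. auto.
Qed.
Lemma dqx1 (x y a b a2 b2 a3 b3 : R -> R) (rx ry t : R) :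
 (forall t, is_derive x t (a t)) -> (forall t, is_derive y t (b t)) ->
 (forall t, is_derive a t (a2 t)) -> (forall t, is_derive b t (b2 t)) ->
 (forall t, is_derive a2 t (a3 t)) -> (forall t, is_derive b2 t (b3 t)) ->
 a t ^2 + b t^2 <> 0 ->
 is_derive (fun t => qx1 (x t - rx) (y t - ry) (a t) (b t) (a2 t) (b2 t)) t
   (qx2 (x t - rx) (y t - ry) (a t) (b t) (a2 t) (b2 t) (a3 t) (b3 t)).
Proof.
intros Hx Hy Ha Hb Ha2 Hb2 Hs. unfold qx1, qx2.
auto_derive; sd. match goal with |- @eq _ ?l ?r => change (@eq R l r) end. rd. field. auto.
Qed.
Lemma dqy1 (x y a b a2 b2 a3 b3 : R -> R) (rx ry t : R) :
 (forall t, is_derive x t (a t)) -> (forall t, is_derive y t (b t)) ->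
 (forall t, is_derive a t (a2 t)) -> (forall t, is_derive b t (b2 t)) ->
 (forall t, is_derive a2 t (a3 t)) -> (forall t, is_derive b2 t (b3 t)) ->
 a t ^2 + b t^2 <> 0 ->
 is_derive (fun t => qy1 (x t - rx) (y t - ry) (a t) (b t) (a2 t) (b2 t)) t
   (qy2 (x t - rx) (y t - ry) (a t) (b t) (a2 t) (b2 t) (a3 t) (b3 t)).
Proof.
intros Hx Hy Ha Hb Ha2 Hb2 Hs. unfold qy1, qy2.
auto_derive; sd. match goal with |- @eq _ ?l ?r => change (@eq R l r) end. rd. field. auto.
Qed.

Definition kden (x0 y0 rx ry a b : R) : R :=
  let v := sqrt (a ^ 2 + b ^ 2) in
  let c := (x0, y0) in let r0 := (rx, ry) in
  let T := (a / v, b / v) in let N := (- b / v, a / v) in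
  dot c N * dot r0 N + dot c T * dot r0 T - dot c N ^ 2 - dot r0 T ^ 2.
Definition knum (x0 y0 rx ry a b a2 b2 : R) : R :=
  let v := sqrt (a ^ 2 + b ^ 2) in
  let c := (x0, y0) in let r0 := (rx, ry) in
  let T := (a / v, b / v) in let N := (- b / v, a / v) in
  let k := dot (a2, b2) N / v ^ 2 in
  let d := vsub r0 c in
  k * (- 2 * k * dot d T ^ 2 + dot d N - 2 * k * dot d N ^ 2).

Lemma sqrt_facts (s : R) : s <> 0 -> 0 <= s -> sqrt s * sqrt s = s /\ sqrt s <> 0.
Proof.
intros H1 H2. split. apply sqrt_sqrt; auto.
intro E. apply H1. rewrite <- (sqrt_sqrt s H2), E. ring.
Qed.

Lemma kden_eq x0 y0 rx ry a b : a^2+b^2 <> 0 ->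
  kden x0 y0 rx ry a b =
  ((-x0*b+y0*a)*(-rx*b+ry*a)+(x0*a+y0*b)*(rx*a+ry*b)-(-x0*b+y0*a)^2-(rx*a+ry*b)^2) / (a^2+b^2).
Proof.
intros Hs. destruct (sqrt_facts (a^2+b^2) Hs) as [hv hv0]. nra.
unfold kden, dot; cbv zeta; cbn [fst snd]. set (v := sqrt (a^2+b^2)) in *.
rewrite <- hv. field. auto.
Qed.

Lemma knum_eq x0 y0 rx ry a b a2 b2 : a^2+b^2 <> 0 ->
  let X := x0 - rx in let Y := y0 - ry in
  let H := Y*a - X*b in let U := X*a + Y*b in let K := a*b2 - b*a2 in
  let s := a^2+b^2 in
  knum x0 y0 rx ry a b a2 b2 = - K * (2*K*(H^2+U^2) + H*s^2) / s^4.
Proof.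
intros Hs X Y H U K s. destruct (sqrt_facts (a^2+b^2) Hs) as [hv hv0]. nra.
unfold knum, dot, vsub; cbv zeta; cbn [fst snd]. set (v := sqrt (a^2+b^2)) in *.
transitivity (- K*(2*K*(H^2+U^2) + H*s*(v*v))/(s^2*(v*v)*(v*v))).
- unfold K, H, U, s, X, Y. rewrite <- hv. field. auto.
- unfold s. rewrite hv. field. auto.
Qed.

Lemma alg x0 y0 rx ry a b a2 b2 a3 b3 : a^2+b^2 <> 0 ->
  let X := x0 - rx in let Y := y0 - ry in
  cross (qx1 X Y a b a2 b2, qy1 X Y a b a2 b2) (qx2 X Y a b a2 b2 a3 b3, qy2 X Y a b a2 b2 a3 b3) /
  cross (qx0 X Y a b + rx, qy0 X Y a b + ry) (qx1 X Y a b a2 b2, qy1 X Y a b a2 b2) =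
  (a^2+b^2) * (knum x0 y0 rx ry a b a2 b2 / kden x0 y0 rx ry a b).
Proof.
intros Hs X Y.
rewrite (kden_eq _ _ _ _ _ _ Hs), (knum_eq _ _ _ _ _ _ _ _ Hs).
set (Hh := Y*a - X*b). set (U := X*a + Y*b). set (K := a*b2 - b*a2). set (s := a^2+b^2).
set (D0 := (-x0*b+y0*a)*(-rx*b+ry*a)+(x0*a+y0*b)*(rx*a+ry*b)-(-x0*b+y0*a)^2-(rx*a+ry*b)^2).
set (P := 2*K*(Hh^2+U^2) + Hh*s^2).
assert (E1 : cross (qx1 X Y a b a2 b2, qy1 X Y a b a2 b2) (qx2 X Y a b a2 b2 a3 b3, qy2 X Y a b a2 b2 a3 b3)
   = K^2 * P / s^4).
{ unfold cross, qx1, qy1, qx2, qy2, P, K, Hh, U, s; simpl. field. intro E; apply Hs; nra. }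
assert (E2 : cross (qx0 X Y a b + rx, qy0 X Y a b + ry) (qx1 X Y a b a2 b2, qy1 X Y a b a2 b2)
   = - K * D0 / s^2).
{ unfold cross, qx0, qy0, qx1, qy1, D0, K, s, X, Y; simpl. field. intro E; apply Hs; nra. }
rewrite E1, E2.
fold P.
destruct (Req_dec K 0) as [HK|HK].
{ rewrite HK. unfold Rdiv. ring_simplify. reflexivity. }
destruct (Req_dec D0 0) as [HD|HD].
{ rewrite HD. unfold Rdiv. rewrite !Rmult_0_r, !Rmult_0_l, Rinv_0. ring. }
assert (s <> 0) by exact Hs. unfold P, Hh, U, X, Y. field. auto.
Qed.

Lemma is_derive_addc f t l c : is_derive f t l -> is_derive (fun u => f u + c) t l.
Proof. intros H. pose proof (is_derive_plus f (fun _ => c) t l zero H (is_derive_const c t)) as H0.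
rewrite plus_zero_r in H0. exact H0. Qed.
Lemma perZ (f : R -> R) c : (forall t, f (t + c) = f t) -> forall z t, f (t + IZR z * c) = f t.
Proof.
intros Hf.
assert (Hn : forall n t, f (t + INR n * c) = f t).
{ induction n as [|n IH]; intros t. simpl. f_equal; ring.
  rewrite S_INR. replace (t + (INR n + 1) * c) with ((t + INR n * c) + c) by ring.
  rewrite Hf. apply IH. }
intros z t. destruct (Z_le_gt_dec 0 z) as [Hz|Hz].
- destruct (IZN z Hz) as [n ->]. rewrite <- INR_IZR_INZ. apply Hn.
- assert (0 <= - z)%Z by lia. destruct (IZN (- z) H) as [n Hn'].
  replace z with (- Z.of_nat n)%Z by lia. rewrite opp_IZR, <- INR_IZR_INZ.
  rewrite <- (Hn n (t + - INR n * c)). f_equal. ring.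
Qed.
Lemma reduce t : exists z, 0 <= t + IZR z * (2*PI) < 2*PI.
Proof.
pose proof PI_RGT_0.
set (q := t / (2*PI)).
destruct (base_Int_part q) as [H1 H2].
exists (- Int_part q)%Z. rewrite opp_IZR.
assert (t = q * (2*PI)) by (unfold q; field; lra).
rewrite H0. set (z := IZR (Int_part q)) in *.
split; nra.
Qed.

Theorem mainTheorem3 (x y : R -> R) (r0 : R * R) :
  C3 x -> C3 y -> regular x y -> closed_curve x y ->
  (strongly_convex (pedal_x x y r0) (pedal_y x y r0) <->
   forall t, 0 <= t < 2 * PI -> kp x y r0 t > 0).
Proof.
intros Cx Cy Hreg Hcl. destruct r0 as [rx ry].
assert (Dx : forall t, is_derive x t (Derive x t)) by (intro t; apply Derive_correct; apply (Cx t)).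
assert (Dy : forall t, is_derive y t (Derive y t)) by (intro t; apply Derive_correct; apply (Cy t)).
assert (Da : forall t, is_derive (Derive x) t (Derive_n x 2 t)).
{ intro t. destruct (Cx t) as [_ [H _]]. exact (Derive_correct _ _ H). }
assert (Db : forall t, is_derive (Derive y) t (Derive_n y 2 t)).
{ intro t. destruct (Cy t) as [_ [H _]]. exact (Derive_correct _ _ H). }
assert (Da2 : forall t, is_derive (Derive_n x 2) t (Derive_n x 3 t)).
{ intro t. destruct (Cx t) as [_ [_ [H _]]]. exact (Derive_correct _ _ H). }
assert (Db2 : forall t, is_derive (Derive_n y 2) t (Derive_n y 3 t)).
{ intro t. destruct (Cy t) as [_ [_ [H _]]]. exact (Derive_correct _ _ H). }
assert (Hs : forall t, Derive x t ^ 2 + Derive y t ^ 2 <> 0).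
{ intros t E. apply (Hreg t). unfold vel.
  assert (Derive x t = 0) by nra. assert (Derive y t = 0) by nra.
  rewrite H, H0. reflexivity. }
assert (Epx : forall t, pedal_x x y (rx, ry) t =
   qx0 (x t - rx) (y t - ry) (Derive x t) (Derive y t) + rx).
{ intro t. destruct (sqrt_facts _ (Hs t)) as [hv hv0]. nra.
  unfold pedal_x, dot, vsub, pt, normal, speed, qx0; cbn [fst snd].
  set (v := sqrt _) in *. rewrite <- hv. field. auto. }
assert (Epy : forall t, pedal_y x y (rx, ry) t =
   qy0 (x t - rx) (y t - ry) (Derive x t) (Derive y t) + ry).
{ intro t. destruct (sqrt_facts _ (Hs t)) as [hv hv0]. nra.
  unfold pedal_y, dot, vsub, pt, normal, speed, qy0; cbn [fst snd].
  set (v := sqrt _) in *. rewrite <- hv. field. auto. }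
assert (DPx : forall t, Derive (pedal_x x y (rx, ry)) t =
   qx1 (x t - rx) (y t - ry) (Derive x t) (Derive y t) (Derive_n x 2 t) (Derive_n y 2 t)).
{ intro t. rewrite (Derive_ext _ _ t Epx). apply is_derive_unique.
  apply is_derive_addc. apply (dqx0 x y (Derive x) (Derive y) (Derive_n x 2) (Derive_n y 2)); auto. }
assert (DPy : forall t, Derive (pedal_y x y (rx, ry)) t =
   qy1 (x t - rx) (y t - ry) (Derive x t) (Derive y t) (Derive_n x 2 t) (Derive_n y 2 t)).
{ intro t. rewrite (Derive_ext _ _ t Epy). apply is_derive_unique.
  apply is_derive_addc. apply (dqy0 x y (Derive x) (Derive y) (Derive_n x 2) (Derive_n y 2)); auto. }
assert (DDPx : forall t, Derive_n (pedal_x x y (rx, ry)) 2 t =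
   qx2 (x t - rx) (y t - ry) (Derive x t) (Derive y t) (Derive_n x 2 t) (Derive_n y 2 t)
       (Derive_n x 3 t) (Derive_n y 3 t)).
{ intro t. change (Derive (Derive (pedal_x x y (rx, ry))) t = 
    qx2 (x t - rx) (y t - ry) (Derive x t) (Derive y t) (Derive_n x 2 t) (Derive_n y 2 t)
       (Derive_n x 3 t) (Derive_n y 3 t)).
  rewrite (Derive_ext _ _ t DPx). apply is_derive_unique.
  apply (dqx1 x y (Derive x) (Derive y) (Derive_n x 2) (Derive_n y 2) (Derive_n x 3) (Derive_n y 3)); auto. }
assert (DDPy : forall t, Derive_n (pedal_y x y (rx, ry)) 2 t =
   qy2 (x t - rx) (y t - ry) (Derive x t) (Derive y t) (Derive_n x 2 t) (Derive_n y 2 t)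
       (Derive_n x 3 t) (Derive_n y 3 t)).
{ intro t. change (Derive (Derive (pedal_y x y (rx, ry))) t = 
    qy2 (x t - rx) (y t - ry) (Derive x t) (Derive y t) (Derive_n x 2 t) (Derive_n y 2 t)
       (Derive_n x 3 t) (Derive_n y 3 t)).
  rewrite (Derive_ext _ _ t DPy). apply is_derive_unique.
  apply (dqy1 x y (Derive x) (Derive y) (Derive_n x 2) (Derive_n y 2) (Derive_n x 3) (Derive_n y 3)); auto. }
assert (Hratio : forall t,
  cross (vel (pedal_x x y (rx, ry)) (pedal_y x y (rx, ry)) t) (acc (pedal_x x y (rx, ry)) (pedal_y x y (rx, ry)) t) /
  cross (pt (pedal_x x y (rx, ry)) (pedal_y x y (rx, ry)) t) (vel (pedal_x x y (rx, ry)) (pedal_y x y (rx, ry)) t)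
  = (Derive x t ^ 2 + Derive y t ^ 2) * kp x y (rx, ry) t).
{ intro t. unfold vel, acc, pt. rewrite Epx, Epy, DPx, DPy, DDPx, DDPy.
  exact (alg (x t) (y t) rx ry _ _ _ _ (Derive_n x 3 t) (Derive_n y 3 t) (Hs t)). }
assert (Hper : forall f : R -> R, (forall t, f (t + 2 * PI) = f t) ->
   forall n t, Derive_n f n (t + 2 * PI) = Derive_n f n t).
{ intros f Hf n t. rewrite <- Derive_n_comp_trans. apply Derive_n_ext. intro u. apply Hf. }
assert (Hperx : forall t, x (t + 2 * PI) = x t) by (intro t; apply Hcl).
assert (Hpery : forall t, y (t + 2 * PI) = y t) by (intro t; apply Hcl).
assert (Hkp : forall t, kp x y (rx, ry) (t + 2 * PI) = kp x y (rx, ry) t).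
{ intro t. unfold kp, curvature, tangent, normal, speed, acc, pt.
  rewrite (Hperx t), (Hpery t).
  change (Derive x (t + 2 * PI)) with (Derive_n x 1 (t + 2 * PI)).
  change (Derive y (t + 2 * PI)) with (Derive_n y 1 (t + 2 * PI)).
  rewrite !(Hper x Hperx), !(Hper y Hpery). reflexivity. }
assert (Hspos : forall t, 0 < Derive x t ^ 2 + Derive y t ^ 2).
{ intro t. pose proof (Hs t). nra. }
split.
- intros Hc t _. specialize (Hc t). rewrite Hratio in Hc. pose proof (Hspos t).
  destruct (Rle_dec (kp x y (rx, ry) t) 0) as [Hl|Hl]; [|lra].
  assert ((Derive x t ^ 2 + Derive y t ^ 2) * kp x y (rx, ry) t <= 0) by nra. lra.
- intros Hk t. unfold strongly_convex. rewrite Hratio.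
  destruct (reduce t) as [z Hz].
  pose proof (perZ _ _ Hkp z t) as E. rewrite <- E.
  pose proof (Hk _ Hz). pose proof (Hspos t). nra.
Qed.
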